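(* Let $H$ be a Heyting algebra, let $I$ be a finite set and let $\Pi=\{(a_i,b_i)\mid i\in I\}$ be a family of pairs of elements of $H$. Define $\phi_\Pi:H\to H$ by $\phi_\Pi(x)=\bigvee_{i\in I}((x\to a_i)\to b_i)$. Then $\phi_\Pi$ converges to its least fixed point in $3$ steps, i.e. $\phi_\Pi^4(\bot)=\phi_\Pi^3(\bot)$, so $\phi_\Pi^3(\bot)$ is the least fixed point of $\phi_\Pi$.
   Context: $\phi_\Pi^n$ denotes the $n$-fold composite of $\phi_\Pi$ with itself; $\bot$ is the least element of $H$. *)

(* Defs.v *)
From HB Require Import structures.
From mathcomp Require Import all_boot all_order.
Set Implicit Arguments. Unset Strict Implicit. Unset Printing Implicit Defensive.
Import Order.TTheory.
Local Open Scope order_scope.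

Definition heyting_imp (d : Order.disp_t) (H : tbLatticeType d)
  (imp : H -> H -> H) : Prop :=
  forall x a b : H, (x `&` a <= b) = (x <= imp a b).

Definition phiPi (d : Order.disp_t) (H : tbLatticeType d) (imp : H -> H -> H)
  (I : finType) (a b : I -> H) (x : H) : H :=
  \join_(i : I) imp (imp x (a i)) (b i).

(* Main.v *)
Require Import Defs.
From HB Require Import structures.
From mathcomp Require Import all_boot all_order.
Import Order.TTheory.
Local Open Scope order_scope.

Section H.
Variables (d : Order.disp_t) (H : tbLatticeType d) (imp : H -> H -> H).
Hypothesis himp : heyting_imp imp.

Lemma resE x a b : x `&` a <= b -> x <= imp a b.
Proof. by rewrite himp. Qed.
Lemma resI x a b : x <= imp a b -> x `&` a <= b.
Proof. by rewrite himp. Qed.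
Lemma mp a b : imp a b `&` a <= b.
Proof. by apply: resI. Qed.
Lemma le_imp a b : b <= imp a b.
Proof. by apply: resE; exact: leIl. Qed.
Lemma imp_anti a a' c : a <= a' -> imp a' c <= imp a c.
Proof.
move=> h; apply: resE; apply: le_trans (mp a' c).
by apply: leI2.
Qed.
Lemma imp_mono a c c' : c <= c' -> imp a c <= imp a c'.
Proof. move=> h; apply: resE; exact: le_trans (mp a c) h. Qed.
Lemma mpl x a b : x <= a -> x <= imp a b -> x <= b.
Proof.
move=> h1 h2; apply: le_trans (mp a b).
by rewrite lexI h1 h2.
Qed.

Variables (I : finType) (a b : I -> H).
Let f i x := imp (imp x (a i)) (b i).
Let phi := phiPi imp a b.

Lemma phiE x : phi x = \join_(i : I) f i x.
Proof. by []. Qed.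

Lemma f_le_phi i x : f i x <= phi x.
Proof. by rewrite phiE; apply: (@joins_sup _ _ _ i xpredT (fun i => f i x)). Qed.

Lemma phi_le x y : (forall i, f i x <= y) -> phi x <= y.
Proof. by move=> h; rewrite phiE; apply/joinsP => i _. Qed.

Lemma f_mono i x y : x <= y -> f i x <= f i y.
Proof. by move=> h; apply: imp_anti; apply: imp_anti. Qed.

Lemma phi_mono x y : x <= y -> phi x <= phi y.
Proof. move=> h; apply: phi_le => i; apply: le_trans (f_le_phi i y); exact: f_mono. Qed.

Lemma b_le_phi i x : b i <= phi x.
Proof. apply: le_trans (f_le_phi i x); exact: le_imp. Qed.

Lemma iter_mono n : iter n phi \bot <= iter n.+1 phi \bot.
Proof. elim: n => [|n IH] /=; [exact: le0x | exact: phi_mono]. Qed.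

Section Main.
Variables (x1 : H).
Hypothesis hb : forall i, b i <= x1.
Let x2 := phi x1.
Hypothesis h12 : x1 <= x2.
Let x3 := phi x2.

Lemma keyK j k :
  imp x2 (a j) `&` imp (a j) (b j) `&` f k x2 <= a j.
Proof.
set c := _ `&` _ `&` _.
have cQ : c <= imp x2 (a j) by rewrite /c -meetA; exact: leIl.
have cE : c <= imp (a j) (b j) by rewrite /c -meetA meetC -meetA; exact: leIl.
have cG : c <= f k x2 by exact: leIr.
have cx2 : c <= x2.
  apply: le_trans (f_le_phi k x1).
  apply: resE.
  apply: (@mpl _ (imp x2 (a k))).
    apply: resE.
    have h1 : c `&` imp x1 (a k) `&` x2 <= x1.
      apply: le_trans (hb j).
      apply: (@mpl _ (a j)); last by apply: le_trans cE; rewrite -meetA; exact: leIl.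
      apply: (@mpl _ x2); first exact: leIr.
      by apply: le_trans cQ; rewrite -meetA; exact: leIl.
    apply: (@mpl _ x1) => //.
    by rewrite -meetA meetC -meetA; exact: leIl.
  by apply: le_trans cG; exact: leIl.
exact: mpl cx2 cQ.
Qed.

Lemma x3_fix : phi x3 <= x3.
Proof.
apply: phi_le => j.
set h := f j x3.
have hE : h <= imp (a j) (b j) by apply: imp_anti; exact: le_imp.
apply: le_trans (f_le_phi j x2).
apply: resE.
apply: (@mpl _ (imp x3 (a j))); last by exact: leIl.
apply: resE.
rewrite meetC.
apply: resI.
rewrite /x3 phiE; apply/joinsP => k _.
apply: resE.
apply: le_trans (keyK j k).
rewrite !lexI leIl /=.
have e1 : f k x2 `&` (h `&` imp x2 (a j)) <= h `&` imp x2 (a j) by exact: leIr.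
rewrite (le_trans e1 (leIr _ _)) /=.
by rewrite (le_trans e1 (le_trans (leIl _ _) hE)).
Qed.

End Main.

End H.

Theorem mainTheorem2 (d : Order.disp_t) (H : tbLatticeType d)
  (imp : H -> H -> H) (himp : heyting_imp imp)
  (I : finType) (a b : I -> H) :
  iter 4 (phiPi imp a b) \bot = iter 3 (phiPi imp a b) \bot /\
  (forall y : H, phiPi imp a b y = y -> iter 3 (phiPi imp a b) \bot <= y).
Proof.
split.
  apply/le_anti; rewrite iter_mono // andbT.
  apply: (@x3_fix _ _ _ himp I a b (phiPi imp a b \bot)).
    by move=> i; apply: b_le_phi.
move=> y hy.
have : forall n, iter n (phiPi imp a b) \bot <= y.
  elim=> [|n IH] /=; first exact: le0x.
  by rewrite -hy; apply: phi_mono.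
by [].
Qed.
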